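(* Let $q\ge4$ be an integer and $f(x)=\log\left|\frac{\sin\pi qx}{\sin\pi x}\right|$. For $t\in\left(\frac{3}{8q},\frac{5}{8q}\right)$ and $t\le s<1/q$, $$G(t,s):=U(s)+V(t,s)<0,$$ where $U(s)=\log\frac{\sin\pi(q^{-1}-s)}{\sin\pi(q^{-1}+s)}$ and $$V(t,s)=f(0)-f(t)+f\left(\frac1q-t-\frac{s-t}{q-1}\right)-f\left(\frac1q-t\right)-f'(t)\frac{s-t}{q-1}.$$
   Context: $f(0)=\log q$ (value of $f$ at $0$ by continuity). *)

(* Defs.v *)
From Stdlib Require Import Reals Lra.
From Coquelicot Require Import Coquelicot.
Open Scope R_scope.

(* f(x) = log |sin(pi q x) / sin(pi x)|, extended by continuity at the
   zeros of sin(pi x) (the integers), where the limit is log q. *)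
Definition fq (q : nat) (x : R) : R :=
  if Req_EM_T (sin (PI * x)) 0 then ln (INR q)
  else ln (Rabs (sin (PI * INR q * x) / sin (PI * x))).

Definition Uq (q : nat) (s : R) : R :=
  ln (sin (PI * (/ INR q - s)) / sin (PI * (/ INR q + s))).

Definition Vq (q : nat) (t s : R) : R :=
  fq q 0 - fq q t
  + fq q (/ INR q - t - (s - t) / (INR q - 1)) - fq q (/ INR q - t)
  - Derive (fq q) t * ((s - t) / (INR q - 1)).

Definition Gq (q : nat) (t s : R) : R := Uq q s + Vq q t s.

(* Main.v *)
Require Import Defs.
From Stdlib Require Import Reals Lra Psatz.
From Coquelicot Require Import Coquelicot.
Open Scope R_scope.
Definition cot x := cos x / sin x.
Lemma cos_ub2 x : -2 <= x <= 2 -> cos x <= 1 - x^2/2 + x^4/24.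
Proof. intros H. destruct (pre_cos_bound x 0 ltac:(lra) ltac:(lra)) as [_ H2].
 unfold cos_approx, cos_term in H2. simpl in H2. lra. Qed.
Lemma cos_lb1 x : -2 <= x <= 2 -> 1 - x^2/2 <= cos x.
Proof. intros H. destruct (pre_cos_bound x 0 ltac:(lra) ltac:(lra)) as [H2 _].
 unfold cos_approx, cos_term in H2. simpl in H2. lra. Qed.
Lemma sin_lb1 x : 0 <= x <= 4 -> x - x^3/6 <= sin x.
Proof. intros H. destruct (pre_sin_bound x 0 ltac:(lra) ltac:(lra)) as [H2 _].
 unfold sin_approx, sin_term in H2. simpl in H2. lra. Qed.
Lemma sin_ub1 x : 0 <= x <= 4 -> sin x <= x - x^3/6 + x^5/120.
Proof. intros H. destruct (pre_sin_bound x 0 ltac:(lra) ltac:(lra)) as [_ H2].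
 unfold sin_approx, sin_term in H2. simpl in H2. lra. Qed.
Lemma PI_ub : PI < 16/5.
Proof. destruct (Rlt_or_le PI (16/5)) as [h|h]; auto. exfalso.
 pose proof (cos_ub2 (8/5) ltac:(lra)). pose proof (cos_ge_0 (8/5) ltac:(lra) ltac:(lra)). lra. Qed.
Lemma sin_le_x' x : 0 <= x <= 4 -> sin x <= x.
Proof. intros H. pose proof (sin_ub1 x H). assert (0 <= x^3) by (apply pow_le; lra).
 assert (x^5 = x^3 * x^2) by ring. assert (x^2 <= 16) by nra. nra. Qed.

Lemma cot_decr a b : 0 < a -> a <= b -> b < PI -> cot b <= cot a.
Proof.
intros. unfold cot.
assert (0 < sin a) by (apply sin_gt_0; lra).
assert (0 < sin b) by (apply sin_gt_0; lra).
assert (0 <= sin (b - a)) by (apply sin_ge_0; lra).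
rewrite sin_minus in H4.
assert (E : cos a / sin a - cos b / sin b = (sin b * cos a - cos b * sin a) / (sin a * sin b)) by (field; lra).
assert (0 <= (sin b * cos a - cos b * sin a) / (sin a * sin b)).
{ apply Rdiv_le_0_compat; nra. }
lra.
Qed.

Lemma cot_sum a b : 0 < a -> 0 < b -> a + b <= PI -> 0 <= cot a + cot b.
Proof.
intros. unfold cot.
assert (0 < sin a) by (apply sin_gt_0; lra).
assert (0 < sin b) by (apply sin_gt_0; lra).
assert (0 <= sin (a + b)) by (apply sin_ge_0; lra).
rewrite sin_plus in H4.
assert (E : cos a / sin a + cos b / sin b = (sin a * cos b + cos a * sin b) / (sin a * sin b)) by (field; lra).
rewrite E. apply Rdiv_le_0_compat; nra.
Qed.

Lemma cot_pos a : 0 < a -> a <= PI / 2 -> 0 <= cot a.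
Proof.
intros. unfold cot.
assert (0 < sin a) by (apply sin_gt_0; lra).
assert (0 <= cos a) by (apply cos_ge_0; lra).
apply Rdiv_le_0_compat; lra.
Qed.

Lemma cot_ub v : 0 < v <= 2 -> cot v <= / v.
Proof.
intros. unfold cot.
pose proof (cos_ub2 v ltac:(lra)). pose proof (sin_lb1 v ltac:(lra)).
assert (0 < sin v) by nra.
assert (v * cos v <= v * (1 - v^2/2 + v^4/24)) by (apply Rmult_le_compat_l; lra).
assert (0 <= v^3) by (apply pow_le; lra).
assert (v^5 = v^3 * v^2) by ring. assert (v^2 <= 4) by nra.
assert (v * cos v <= sin v) by nra.
apply (Rmult_le_reg_r (v * sin v)). nra.
replace (cos v / sin v * (v * sin v)) with (v * cos v) by (field; lra).
replace (/ v * (v * sin v)) with (sin v) by (field; lra). lra.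
Qed.

Lemma cot_lb w : 0 < w <= 1 -> (1 - w^2/2) / w <= cot w.
Proof.
intros. unfold cot.
pose proof (cos_lb1 w ltac:(lra)). pose proof (sin_lb1 w ltac:(lra)). pose proof (sin_le_x' w ltac:(lra)).
assert (0 < sin w) by nra.
apply (Rmult_le_reg_r (w * sin w)). nra.
replace (cos w / sin w * (w * sin w)) with (w * cos w) by (field; lra).
replace ((1 - w^2/2) / w * (w * sin w)) with ((1 - w^2/2) * sin w) by (field; lra).
assert (0 <= 1 - w^2/2) by nra.
assert ((1 - w^2/2) * sin w <= (1 - w^2/2) * w) by (apply Rmult_le_compat_l; lra).
nra.
Qed.
Definition F (Q x : R) := ln (sin (PI * Q * x)) - ln (sin (PI * x)).
Definition Phi (Q t Dt s : R) :=
  ln (sin (PI * (/ Q - s))) - ln (sin (PI * (/ Q + s))) + ln Q - F Q t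
  + F Q (/ Q - t - (s - t) / (Q - 1)) - F Q (/ Q - t) - Dt * ((s - t) / (Q - 1)).
Definition dPhi (Q t Dt c : R) :=
  let z := / Q - t - (c - t) / (Q - 1) in
  - PI * cot (PI * (/ Q - c)) - PI * cot (PI * (/ Q + c))
  - (PI * Q * cot (PI * Q * z) - PI * cot (PI * z)) / (Q - 1) - Dt / (Q - 1).

Lemma sinpos y : 0 < y < 1 -> 0 < sin (PI * y).
Proof. intros H. apply sin_gt_0. pose proof PI_RGT_0; nra. pose proof PI_RGT_0; nra. Qed.

Lemma geom Q t c : 4 <= Q -> 0 < t -> t <= c < / Q ->
  let z := / Q - t - (c - t) / (Q - 1) in
  0 < / Q - c < 1 /\ 0 < / Q + c < 1 /\ 0 < Q * z < 1 /\ 0 < z < 1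
  /\ /Q - c <= z /\ Q * z + Q * t <= 1 /\ / Q + c <= 1/2.
Proof.
intros HQ Ht Hc z.
assert (HQ0 : 0 < Q) by lra.
assert (Hi : Q * / Q = 1) by (field; lra).
assert (Hi4 : / Q <= / 4) by (apply Rinv_le_contravar; lra).
set (u := (c - t) / (Q - 1)) in *.
assert (Hu : u * (Q - 1) = c - t) by (unfold u; field; lra).
assert (Hu0 : 0 <= u) by (unfold u; apply Rdiv_le_0_compat; lra).
assert (Hz : z = / Q - t - u) by reflexivity.
assert (u <= c - t) by nra.
repeat split; try nra.
Qed.

Lemma Phi_der Q t Dt c : 4 <= Q -> 0 < t -> t <= c < / Q ->
  is_derive (Phi Q t Dt) c (dPhi Q t Dt c).
Proof.
intros HQ Ht Hc.
destruct (geom Q t c HQ Ht Hc) as (H1 & H2 & H3 & H4 & _).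
set (z := / Q - t - (c - t) / (Q - 1)) in *.
assert (S1 := sinpos _ H1). assert (S2 := sinpos _ H2).
assert (S3 := sinpos _ H3). assert (S4 := sinpos _ H4).
rewrite <- Rmult_assoc in S3.
unfold Phi, F, dPhi, cot.
auto_derive.
- unfold z in *. unfold Rminus in *. repeat split; assumption.
- unfold z in *. unfold Rminus, Rdiv in *. field. repeat split; try lra.
Qed.

Lemma dPhi_neg Q t c : 4 <= Q -> 3 / (8 * Q) < t < 5 / (8 * Q) -> t <= c < / Q ->
  dPhi Q t (PI * Q * cot (PI * Q * t) - PI * cot (PI * t)) c <= 0.
Proof.
intros HQ Ht Hc.
assert (HQ0 : 0 < Q) by lra.
assert (Ha : 3 < 8 * Q * t /\ 8 * Q * t < 5).
{ assert (E3 : 3 = 3 / (8 * Q) * (8 * Q)) by (field; lra).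
  assert (E5 : 5 = 5 / (8 * Q) * (8 * Q)) by (field; lra). split; nra. }
assert (Ht0 : 0 < t) by nra.
assert (Hi : Q * / Q = 1) by (field; lra).
assert (Hi4 : / Q <= / 4) by (apply Rinv_le_contravar; lra).
pose proof PI_ub as Hpi. pose proof PI_RGT_0 as Hpi0.
destruct (geom Q t c HQ Ht0 Hc) as (H1 & H2 & H3 & H4 & H5 & H6 & H7).
unfold dPhi. set (z := / Q - t - (c - t) / (Q - 1)) in *.
set (A1 := cot (PI * (/ Q - c))). set (A2 := cot (PI * (/ Q + c))).
set (B1 := cot (PI * Q * z)). set (B2 := cot (PI * z)).
set (C1 := cot (PI * Q * t)). set (C2 := cot (PI * t)).
assert (hA2 : 0 <= A2) by (apply cot_pos; nra).
assert (hB1C1 : 0 <= B1 + C1).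
{ apply cot_sum; try nra; rewrite !Rmult_assoc, <- Rmult_plus_distr_l; nra. }
assert (hB2 : B2 <= A1) by (apply cot_decr; nra).
assert (hC2 : C2 * (3 * PI) <= 8 * Q).
{ assert (C2 <= / (PI * t)) by (apply cot_ub; split; nra).
  assert (0 <= C2) by (apply cot_pos; nra).
  assert (/ (PI * t) * (PI * t) = 1) by (field; nra).
  assert (h1 : C2 * (PI * t) <= 1).
  { assert (C2 * (PI * t) <= / (PI * t) * (PI * t)) by (apply Rmult_le_compat_r; nra). lra. }
  assert (h2 : 0 <= C2 * PI * (8 * Q * t - 3)).
  { apply Rmult_le_pos; [apply Rmult_le_pos|]; lra. }
  nra. }
assert (hA1 : 7 * Q <= A1 * (5 * PI)).
{ set (w := PI * (/ Q - c)) in *.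
  assert (hw : w * (8 * Q) <= 5 * PI).
  { unfold w. assert (Q * (/ Q - c) <= Q * (/Q - t)) by nra. nra. }
  assert (hw1 : w <= 1/2) by nra.
  assert (hw0 : 0 < w) by (unfold w; nra).
  assert ((1 - w^2/2) / w <= A1) by (apply cot_lb; lra).
  assert ((1 - w^2/2) / w * w = 1 - w^2/2) by (field; lra).
  assert (7/8 <= A1 * w) by nra.
  assert (0 <= A1) by nra.
  nra. }
assert (E : (- PI * A1 - PI * A2 - (PI * Q * B1 - PI * B2) / (Q - 1) -
   (PI * Q * C1 - PI * C2) / (Q - 1)) * (Q - 1) =
   PI * (- (Q - 1) * A1 - (Q - 1) * A2 - Q * (B1 + C1) + B2 + C2)) by (field; lra).
assert (0 <= A1) by nra.
assert (K : - (Q - 1) * A1 - (Q - 1) * A2 - Q * (B1 + C1) + B2 + C2 <= 0).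
{ assert (0 <= (Q - 1) * A2) by nra. assert (0 <= Q * (B1 + C1)) by nra.
  assert (C2 <= (Q - 2) * A1) by nra. lra. }
assert (0 <= - (PI * (- (Q - 1) * A1 - (Q - 1) * A2 - Q * (B1 + C1) + B2 + C2))) by nra.
nra.
Qed.

Lemma base Q t : 4 <= Q -> 3 / (8 * Q) < t < 5 / (8 * Q) ->
  Q * sin (PI * t) * sin (PI * (/ Q - t)) < sin (PI * Q * t) * sin (PI * (/ Q + t)).
Proof.
intros HQ Ht.
assert (HQ0 : 0 < Q) by lra.
set (a := Q * t).
assert (Ha : 3 < 8 * a /\ 8 * a < 5).
{ assert (E3 : 3 = 3 / (8 * Q) * (8 * Q)) by (field; lra).
  assert (E5 : 5 = 5 / (8 * Q) * (8 * Q)) by (field; lra). unfold a; split; nra. }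
pose proof PI_ub as Hpi. pose proof PI_RGT_0 as Hpi0.
set (th := PI / Q).
assert (Hth : Q * th = PI) by (unfold th; field; lra).
assert (Hth0 : 0 < th) by (unfold th; apply Rdiv_lt_0_compat; lra).
assert (Hth1 : th <= 4/5) by (unfold th; apply Rle_div_l; lra).
assert (e1 : PI * t = th * a) by (unfold th, a; field; lra).
assert (e2 : PI * (/ Q - t) = th * (1 - a)) by (unfold th, a; field; lra).
assert (e3 : PI * (/ Q + t) = th * (1 + a)) by (unfold th, a; field; lra).
assert (e4 : PI * Q * t = PI * a) by (unfold a; ring).
rewrite e1, e2, e3, e4.
assert (s1 : sin (th * a) <= th * a) by (apply sin_le_x'; split; nra).
assert (s1' : 0 < sin (th * a)) by (apply sin_gt_0; nra).
assert (s2 : sin (th * (1 - a)) <= th * (1 - a)) by (apply sin_le_x'; split; nra).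
assert (s2' : 0 < sin (th * (1 - a))) by (apply sin_gt_0; nra).
assert (s3 : 23/25 <= sin (PI * a)).
{ rewrite <- cos_shift. pose proof (cos_lb1 (PI / 2 - PI * a) ltac:(split; nra)).
  assert ((PI / 2 - PI * a)^2 <= 4/25).
  { assert ((PI / 2 - PI * a)^2 = PI^2 * (1/2 - a)^2) by (unfold a; field).
    assert ((1/2 - a)^2 <= 1/64) by nra. assert (PI^2 <= 256/25) by nra. nra. }
  lra. }
set (v := th * (1 + a)).
assert (s4 : v - v^3/6 <= sin v) by (apply sin_lb1; unfold v; split; nra).
assert (s4b : v * (71/100) <= v - v^3/6).
{ assert (v^2 <= 169/100) by (unfold v; assert ((1+a)^2 <= 169/64) by nra; assert (th^2 <= 16/25) by nra; 
     replace ((th * (1 + a))^2) with (th^2 * (1+a)^2) by ring; nra).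
  assert (0 < v) by (unfold v; nra). nra. }
assert (L : Q * sin (th * a) * sin (th * (1 - a)) <= PI * th * (a * (1 - a))).
{ assert (sin (th * a) * sin (th * (1 - a)) <= (th * a) * (th * (1 - a))).
  { apply Rmult_le_compat; lra. }
  assert (Q * (sin (th * a) * sin (th * (1 - a))) <= Q * ((th * a) * (th * (1 - a)))) by (apply Rmult_le_compat_l; lra).
  rewrite <- Hth. nra. }
assert (R : 23/25 * (71/100) * v <= sin (PI * a) * sin v).
{ assert (0 < v) by (unfold v; nra). 
  assert (v * (71/100) <= sin v) by lra.
  apply Rle_trans with (23/25 * sin v). nra. apply Rmult_le_compat_r; nra. }
assert (M : PI * th * (a * (1 - a)) < 23/25 * (71/100) * v).
{ unfold v. assert (PI * (a * (1 - a)) < 23/25 * (71/100) * (1 + a)).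
  { assert (0 < a * (1 - a)) by nra.
    assert (PI * (a * (1 - a)) <= 16/5 * (a * (1 - a))) by nra. nra. }
  nra. }
lra.
Qed.

Lemma fq0 q : fq q 0 = ln (INR q).
Proof. unfold fq. rewrite Rmult_0_r, sin_0. destruct (Req_EM_T 0 0); [reflexivity | lra]. Qed.

Lemma fq_eq q x : 4 <= INR q -> 0 < x < / INR q -> fq q x = F (INR q) x.
Proof.
intros HQ Hx. unfold fq, F.
assert (Q1 : INR q * / INR q = 1) by (field; lra).
assert (h1 : 0 < sin (PI * x)) by (apply sinpos; split; try lra; assert (/ INR q <= / 4) by (apply Rinv_le_contravar; lra); lra).
assert (h2 : 0 < sin (PI * INR q * x)).
{ rewrite Rmult_assoc. apply sinpos. split; nra. }
destruct (Req_EM_T (sin (PI * x)) 0) as [e|e]; [lra|].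
rewrite Rabs_right. apply ln_div; lra.
left. apply Rdiv_lt_0_compat; lra.
Qed.

Lemma Derive_fq q t : 4 <= INR q -> 0 < t < / INR q ->
  Derive (fq q) t = PI * INR q * cot (PI * INR q * t) - PI * cot (PI * t).
Proof.
intros HQ Ht. apply is_derive_unique.
apply is_derive_ext_loc with (F (INR q)).
- apply (locally_interval _ t 0 (/ INR q)); simpl; try lra.
  intros y Hy1 Hy2. symmetry. apply fq_eq; auto.
- assert (Q1 : INR q * / INR q = 1) by (field; lra).
  assert (h1 : 0 < sin (PI * t)) by (apply sinpos; split; try lra; assert (/ INR q <= / 4) by (apply Rinv_le_contravar; lra); lra).
  assert (h2 : 0 < sin (PI * INR q * t)).
  { rewrite Rmult_assoc. apply sinpos. split; nra. }
  unfold F, cot. auto_derive.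
  + split; [exact h2|split; [exact h1|exact I]].
  + field. lra.
Qed.

Theorem lemma5p10 (q : nat) (t s : R) :
  (4 <= q)%nat ->
  3 / (8 * INR q) < t < 5 / (8 * INR q) ->
  t <= s < / INR q ->
  Gq q t s < 0.
Proof.
intros Hq Ht Hs.
assert (HQ : 4 <= INR q) by (replace 4 with (INR 4) by (simpl; lra); apply le_INR; exact Hq).
set (Q := INR q) in *.
assert (HQ0 : 0 < Q) by lra.
assert (Ha : 3 < 8 * Q * t /\ 8 * Q * t < 5).
{ assert (E3 : 3 = 3 / (8 * Q) * (8 * Q)) by (field; lra).
  assert (E5 : 5 = 5 / (8 * Q) * (8 * Q)) by (field; lra). split; nra. }
assert (Ht0 : 0 < t) by nra.
assert (Ht1 : t < / Q) by lra.
assert (Hi4 : / Q <= / 4) by (apply Rinv_le_contravar; lra).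
set (Dt := PI * Q * cot (PI * Q * t) - PI * cot (PI * t)).
assert (EG : Gq q t s = Phi Q t Dt s).
{ destruct (geom Q t s HQ Ht0 Hs) as (H1 & H2 & H3 & H4 & H5 & H6 & H7).
  assert (Hz : 0 < / Q - t - (s - t) / (Q - 1) < / Q).
  { split. nra. assert (0 <= (s - t) / (Q - 1)) by (apply Rdiv_le_0_compat; lra). lra. }
  unfold Gq, Uq, Vq, Phi. fold Q.
  rewrite fq0. fold Q.
  assert (E1 : fq q t = F Q t) by (apply fq_eq; [exact HQ| exact (conj Ht0 Ht1)]).
  assert (E2 : fq q (/ Q - t - (s - t) / (Q - 1)) = F Q (/ Q - t - (s - t) / (Q - 1))) by (apply fq_eq; [exact HQ| exact Hz]).
  assert (E3 : fq q (/ Q - t) = F Q (/ Q - t)) by (apply fq_eq; [exact HQ| change (0 < / Q - t < / Q); lra]).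
  assert (E4 : Derive (fq q) t = Dt) by (apply Derive_fq; [exact HQ| exact (conj Ht0 Ht1)]).
  rewrite E1, E2, E3, E4.
  rewrite ln_div. ring. apply sinpos; lra. apply sinpos; lra. }
rewrite EG.
assert (Hbase : Phi Q t Dt t < 0).
{ unfold Phi. replace ((t - t) / (Q - 1)) with 0 by (field; lra).
  replace (/ Q - t - 0) with (/ Q - t) by ring.
  pose proof (base Q t HQ Ht) as B.
  assert (Q1 : Q * / Q = 1) by (field; lra).
  assert (h1 : 0 < sin (PI * t)) by (apply sinpos; split; try lra; assert (/ Q <= / 4) by (apply Rinv_le_contravar; lra); lra).
  assert (h2 : 0 < sin (PI * Q * t)).
  { rewrite Rmult_assoc. apply sinpos. assert (8 * Q * t = 8 * (Q * t)) by ring. split; lra. }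
  assert (h3 : 0 < sin (PI * (/ Q - t))) by (apply sinpos; split; lra).
  assert (h4 : 0 < sin (PI * (/ Q + t))) by (apply sinpos; split; try lra; assert (/ Q <= / 4) by (apply Rinv_le_contravar; lra); lra).
  assert (P0 : 0 < Q * sin (PI * t) * sin (PI * (/ Q - t))).
  { apply Rmult_lt_0_compat; [apply Rmult_lt_0_compat|]; lra. }
  pose proof (ln_increasing _ _ P0 B) as L.
  rewrite !ln_mult in L by (try apply Rmult_lt_0_compat; lra).
  unfold F. lra. }
destruct (MVT_gen (Phi Q t Dt) t s (dPhi Q t Dt)) as (c & Hc & E).
- intros x Hx. rewrite Rmin_left in Hx by lra. rewrite Rmax_right in Hx by lra.
  apply Phi_der; auto; lra.
- intros x Hx. rewrite Rmin_left in Hx by lra. rewrite Rmax_right in Hx by lra.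
  apply continuity_pt_filterlim.
  assert (D : is_derive (Phi Q t Dt) x (dPhi Q t Dt x)) by (apply Phi_der; auto; lra).
  exact (ex_derive_continuous (Phi Q t Dt) x (ex_intro _ _ D)).
- rewrite Rmin_left in Hc by lra. rewrite Rmax_right in Hc by lra.
  assert (dPhi Q t Dt c <= 0) by (apply dPhi_neg; auto; lra).
  assert (dPhi Q t Dt c * (s - t) <= 0).
  { assert (0 <= - dPhi Q t Dt c * (s - t)) by (apply Rmult_le_pos; lra). lra. }
  lra.
Qed.
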